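(* Let $\mathcal{P}$ be an arbitrary set of primes all smaller than $\log x$, and let $S(x, \mathcal{P})$ be the number of positive integers $n \le x$ not divisible by any prime in $\mathcal{P}$. Then $$S(x,\mathcal{P}) \le (1+o(1)) \, x \exp\Big(-\sum_{p \in \mathcal{P}} \frac1p\Big)$$ as $x \to \infty$.
   Context: $\log$ is the natural logarithm. *)

(* Defs.v *)
From HB Require Import structures.
From mathcomp Require Import all_boot all_order all_algebra.
From mathcomp Require Import all_classical all_reals all_analysis.
Set Implicit Arguments. Unset Strict Implicit. Unset Printing Implicit Defensive.
Import Order.TTheory GRing.Theory Num.Theory.
Local Open Scope ring_scope.

(* S(x, P) = #{ n : 1 <= n <= x, no p in P divides n }.
   The (necessarily finite) set P is given as a duplicate-free list. *)
Definition S_count (R : realType) (x : R) (P : seq nat) : nat :=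
  count (fun n : nat => all (fun p : nat => ~~ (p %| n)%N) P) (iota 1 (Num.truncn x)).

(* Main.v *)
Require Import Defs.
From HB Require Import structures.
From mathcomp Require Import all_boot all_order all_algebra.
From mathcomp Require Import all_classical all_reals all_analysis.
From mathcomp Require Import zify.
Import Order.TTheory GRing.Theory Num.Theory.
Local Open Scope ring_scope.

Definition Aok (P : seq nat) (n : nat) : bool := all (fun p : nat => ~~ (p %| n)%N) P.
Definition fc (N : nat) (P : seq nat) : nat := count (Aok P) (iota 1 N).

Lemma Aok_mul p P m : prime p -> p \notin P -> all prime P -> Aok P (p * m) = Aok P m.
Proof.
move=> pp pP aP; apply: eq_in_all => q qP /=.
have qp : prime q by move/allP: aP => /(_ q qP).
rewrite Euclid_dvdM // dvdn_prime2 //.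
have -> : (q == p) = false by apply/eqP => E; move: pP; rewrite -E qP.
by [].
Qed.

Lemma iotaS1 N : iota 1 N.+1 = iota 1 N ++ [:: N.+1].
Proof. by rewrite -[N.+1]addn1 iotaD addnC. Qed.

Lemma fc_cons N p P : prime p -> p \notin P -> all prime P ->
  fc N P = (fc N (p :: P) + fc (N %/ p) P)%N.
Proof.
move=> pp pP aP; elim: N => [|N IH]; first by rewrite /fc div0n.
have p0 : (0 < p)%N by apply: prime_gt0.
rewrite /fc in IH *.
case: (boolP (p %| N.+1)%N) => hd.
- have D : (N.+1 %/ p = (N %/ p).+1)%N by rewrite divnS // hd.
  have E : N.+1 = (p * (N %/ p).+1)%N.
    by rewrite -{1}(divnK hd) D mulnC.
  rewrite D !iotaS1 !count_cat /= !addn0.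
  rewrite hd /= -(@Aok_mul p P (N %/ p).+1 pp pP aP) -E IH; lia.
- have D : (N.+1 %/ p = (N %/ p))%N by rewrite divnS // (negbTE hd).
  rewrite D !iotaS1 !count_cat /= !addn0 hd /= IH; lia.
Qed.

From mathcomp Require Import ring lra.
Section Err.
Variable R : realType.
Definition Pi (P : seq nat) : R := \prod_(p <- P) (1 - (p%:R)^-1).

Lemma Pi_bnd P : all prime P -> 0 <= Pi P <= 1.
Proof.
elim: P => [|p P IH] /=; first by rewrite /Pi big_nil ler01 lexx.
case/andP=> pp aP; have /andP[h0 h1] := IH aP.
rewrite /Pi big_cons -/(Pi P).
have p1 : 1 <= (p%:R : R) by rewrite ler1n prime_gt0.
have i0 : 0 <= (p%:R : R)^-1 by rewrite invr_ge0; lra.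
have i1 : (p%:R : R)^-1 <= 1 by rewrite invf_le1; lra.
apply/andP; split; nra.
Qed.

Lemma ring_aux (a b c e f g : R) :
  a - b - c * ((1 - e^-1) * f) = a - c * f - (b - g * f) - (g - c / e) * f.
Proof. ring. Qed.

Lemma lin_aux (K x y c : R) : - (K - 1) <= x <= K - 1 -> - (K - 1) <= y <= K - 1 ->
  -1 <= c <= 1 -> - (2%:R * K - 1) <= x - y - c <= 2%:R * K - 1.
Proof. move=> /andP[? ?] /andP[? ?] /andP[? ?]; apply/andP; split; lra. Qed.

Lemma err P : uniq P -> all prime P -> forall N : nat,
  `|(fc N P)%:R - N%:R * Pi P| <= (2 ^ size P)%:R - 1.
Proof.
elim: P => [|p P IH] /=.
  by move=> _ _ N; rewrite /Pi big_nil /fc count_predT size_iota mulr1 subrr normr0 expn0 subrr.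
case/andP=> pP uP /andP[pp aP] N.
have IHN := IH uP aP N; have IHq := IH uP aP (N %/ p)%N.
have E := @fc_cons N p P pp pP aP.
have hN : (fc N (p :: P))%:R = (fc N P)%:R - (fc (N %/ p) P)%:R :> R.
  by rewrite E natrD addrK.
have /andP[h0 h1] := @Pi_bnd P aP.
have p0 : 0 < (p%:R : R) by rewrite ltr0n prime_gt0.
set q : R := (N %/ p)%:R; set r : R := (N %% p)%:R.
have Nqr : (N%:R : R) = q * p%:R + r by rewrite /q /r -natrM -natrD -divn_eq.
have r0 : 0 <= r by rewrite /r ler0n.
have rp : r <= p%:R by rewrite /r ler_nat ltnW // ltn_mod prime_gt0.
set d : R := q - N%:R / p%:R.
have dE : d = - (r / p%:R).
  by rewrite /d Nqr mulrDl mulfK ?gt_eqF // opprD addrA subrr add0r.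
have rp1 : r / p%:R <= 1 by rewrite ler_pdivrMr // mul1r.
have rp0 : 0 <= r / p%:R by rewrite divr_ge0 // ltW.
have c1 : -1 <= d * Pi P <= 1 by rewrite dE; apply/andP; split; nra.
rewrite hN /Pi big_cons -/(Pi P).
have -> : (fc N P)%:R - (fc (N %/ p) P)%:R - N%:R * ((1 - (p%:R)^-1) * Pi P)
  = ((fc N P)%:R - N%:R * Pi P) - ((fc (N %/ p) P)%:R - q * Pi P) - d * Pi P.
  by rewrite /d; apply: ring_aux.
move: IHN IHq c1; rewrite -/q !ler_norml expnS natrM; apply: lin_aux.
Qed.
End Err.

Section Ana.
Variable R : realType.

Lemma Pi_exp P : all prime P -> Pi R P <= expR (- \sum_(p <- P) (p%:R : R)^-1).
Proof.
elim: P => [|p P IH] /=; first by rewrite /Pi !big_nil oppr0 expR0.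
case/andP=> pp aP; rewrite /Pi big_cons -/(Pi R P) big_cons opprD expRD.
have p1 : 1 <= (p%:R : R) by rewrite ler1n prime_gt0.
have i1 : (p%:R : R)^-1 <= 1 by rewrite invf_le1; lra.
have /andP[h0 _] := @Pi_bnd R P aP.
apply: ler_pM => //; first by rewrite subr_ge0.
  by have := expR_ge1Dx (- (p%:R : R)^-1); rewrite addrC.
exact: IH.
Qed.

Definition Fb (p : nat) : R := 5^-1 + 3 / 10 * ((p == 2)%:R + (p == 3)%:R).

Lemma Fb_ge p : prime p -> (p%:R : R)^-1 <= Fb p.
Proof.
move=> pp; rewrite /Fb.
have p2 : (2 <= p)%N by apply: prime_gt1.
case: (eqVneq p 2) => [->|n2]; first by rewrite /=; lra.
case: (eqVneq p 3) => [->|n3]; first by rewrite /=; lra.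
have p5 : (5 <= p)%N.
  case: p pp p2 n2 n3 => [|[|[|[|[|p]]]]] //.
have p5' : (5 : R) <= p%:R by rewrite (ler_nat R 5 p).
rewrite /= !addr0 mulr0 addr0.
rewrite lef_pV2 ?posrE //; lra.
Qed.

Lemma sumFb s : \sum_(p <- s) Fb p =
  (size s)%:R / 5 + 3 / 10 * ((count_mem 2 s)%:R + (count_mem 3 s)%:R).
Proof.
elim: s => [|p s IH]; first by rewrite big_nil /=; lra.
rewrite big_cons IH /Fb /= !natrD; set a := (count_mem _ _)%:R; set b := (count_mem _ _)%:R.
rewrite -[(size s).+1]addn1 natrD; lra.
Qed.

Lemma sum_inv_bnd P : uniq P -> all prime P ->
  \sum_(p <- P) (p%:R : R)^-1 <= (size P)%:R / 5 + 3 / 5.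
Proof.
move=> uP aP.
apply: (le_trans (y := \sum_(p <- P) Fb p)).
  by rewrite big_seq [X in _ <= X]big_seq; apply: ler_sum => i iP; apply: Fb_ge; move/allP: aP; apply.
rewrite sumFb !count_uniq_mem //.
have h2 : ((2 \in P)%:R : R) <= 1 by case: (2 \in P) => /=; lra.
have h3 : ((3 \in P)%:R : R) <= 1 by case: (3 \in P) => /=; lra.
have g2 : 0 <= ((2 \in P)%:R : R) by apply: ler0n.
have g3 : 0 <= ((3 \in P)%:R : R) by apply: ler0n.
lra.
Qed.

Lemma two_le : (2 : R) <= expR (3 / 4).
Proof.
have -> : (3 / 4 : R) = 8%:R * (3 / 32) by lra.
rewrite expRM_natl.
have h := expR_ge1Dx (3 / 32 : R).
set y := expR _ in h *.
have e8 : y ^+ 8 = (y * y) * (y * y) * ((y * y) * (y * y)) by rewrite -!expr2 -!exprM.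
rewrite e8.
have y2 : 299 / 250 <= y * y by nra.
have y4 : 143 / 100 <= (y * y) * (y * y) by nra.
nra.
Qed.

End Ana.

Lemma size_bnd (R : realType) (x : R) (P : seq nat) : 1 <= x -> uniq P ->
  (forall p, p \in P -> prime p /\ (p%:R < ln x)) -> (size P)%:R <= ln x + 1.
Proof.
move=> x1 uP hP.
have l0 : 0 <= ln x by apply: ln_ge0.
have : (size P <= size (iota 0 (Num.truncn (ln x)).+1))%N.
  apply: uniq_leq_size => // p pP; rewrite mem_iota /= add0n ltnS.
  have [_ h] := hP p pP; rewrite truncn_ge_nat //; exact: ltW.
rewrite size_iota -(ler_nat R) => h; apply: (le_trans h).
rewrite -addn1 natrD lerD2r truncn_le //.
Qed.

Theorem corollary3p8 (R : realType) :
  forall eps : R, 0 < eps ->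
  exists X : R, forall x : R, X <= x ->
  forall P : seq nat, uniq P ->
    (forall p, p \in P -> prime p /\ (p%:R < ln x)) ->
    (S_count x P)%:R <= (1 + eps) * x * expR (- \sum_(p <- P) (p%:R)^-1).
Proof.
move=> eps e0.
set M := Num.max 1 (31 - 20 * ln eps).
exists (expR M) => x Xx P uP hP.
have M1 : 1 <= M by rewrite le_max lexx.
have MM : 31 - 20 * ln eps <= M by rewrite le_max lexx orbT.
have eM : 1 <= expR M by rewrite -expR0 ler_expR; lra.
have x1 : 1 <= x by apply: le_trans Xx.
have x0 : 0 < x by lra.
have lx : M <= ln x.
  by rewrite -(expRK M) ler_ln // ?posrE ?expR_gt0.
have aP : all prime P by apply/allP => p /hP [].
have Sc : S_count x P = fc (Num.truncn x) P by [].
rewrite Sc.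
set k := size P; set N := Num.truncn x.
set s := \sum_(p <- P) (p%:R : R)^-1.
have hk := @size_bnd R x P x1 uP hP; rewrite -/k in hk.
have hs := @sum_inv_bnd R P uP aP; rewrite -/s -/k in hs.
have he := @err R P uP aP N; rewrite -/k in he.
have /andP[Pi0 _] := @Pi_bnd R P aP.
have hPi := @Pi_exp R P aP; rewrite -/s in hPi.
have Nx : (N%:R : R) <= x by rewrite /N truncn_le; lra.
have f1 : (fc N P)%:R <= x * expR (- s) + (2 ^ k)%:R.
  move: he; rewrite ler_norml => /andP[_ h].
  have : N%:R * Pi R P <= x * expR (- s).
    by apply: ler_pM.
  lra.
suff f2 : ((2 ^ k)%:R : R) <= eps * (x * expR (- s)).
  move: f1 f2; rewrite -!mulrA; lra.
have E0 : 0 < expR s by apply: expR_gt0.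
rewrite expRN mulrA ler_pdivlMr //.
have t2 : ((2 ^ k)%:R : R) <= expR (k%:R * (3 / 4)).
  rewrite natrX expRM_natl; apply: lerXn2r; rewrite ?nnegrE ?expR_ge0 //.
  exact: two_le.
apply: (le_trans (y := expR (k%:R * (3 / 4)) * expR s)).
  by apply: ler_pM => //; rewrite ltW.
rewrite -expRD -[eps * x](@lnK R) ?posrE ?mulr_gt0 // lnM ?posrE //.
rewrite ler_expR; lra.
Qed.
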